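(* Let $K\subseteq\mathbb{R}^n$ be a proper polyhedral cone with representation $(H,V)$, let $\mathbf{e}\in\mathrm{int}(K)$, let $A\in\mathbb{R}^{n\times n}$ be $K$-Metzler, and let $c\in\mathbb{R}$. The following are equivalent: (i) $\mu_{\mathbf{e},K}(A)\le c$; (ii) $A\mathbf{e}\preceq_K c\,\mathbf{e}$; (iii) $HA\mathbf{e}\le cH\mathbf{e}$. If additionally $K$ is pointed and $\mathbf{e}^*\in\mathrm{int}(K^* )$, the following are equivalent: (iv) $\mu^{\mathrm{d}}_{\mathbf{e}^*,K^*}(A)\le c$; (v) $A^{\top}\mathbf{e}^*\preceq_{K^*}c\,\mathbf{e}^*$; (vi) $V^{\top}A^{\top}\mathbf{e}^*\le cV^{\top}\mathbf{e}^*$.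
   Context: A cone is a nonempty closed convex set $K\subseteq\mathbb{R}^n$ with $\lambda K\subseteq K$ for $\lambda\ge0$; proper: $\mathrm{int}(K)\ne\emptyset$; pointed: $K\cap(-K)=\{0\}$. Polyhedral with representation $(H,V)$: $K=\{x:Hx\ge0\}=\{Vy:y\ge0\}$. Preorder $x\preceq_K y\iff y-x\in K$; interval $[x,y]_K=\{z:x\preceq_Kz\preceq_Ky\}$. Dual cone $K^*=\{\phi\in\mathbb{R}^n:\langle\phi,x\rangle\ge0\ \forall x\in K\}$. $A$ is $K$-Metzler if $\langle\phi,Av\rangle\ge0$ whenever $\phi\in K^*$, $v\in K$, $\langle\phi,v\rangle=0$. Gauge seminorm: $\|v\|_{\mathbf{e},K}=\inf\{\lambda\ge0:v\in\lambda[-\mathbf{e},\mathbf{e}]_K\}$; dual gauge norm: $\|v\|^{\mathrm{d}}_{\mathbf{e}^*,K^*}=\max\{|\langle\eta,v\rangle|:\eta\in[-\mathbf{e}^*,\mathbf{e}^*]_{K^*}\}$. For a seminorm $|||\cdot|||$ on $\mathbb{R}^n$ with kernel $\mathrm{Ker}=\{x:|||x|||=0\}$, the induced seminorm of a matrix is $|||M|||=\sup\{|||Mx|||:|||x|||=1,\ x\perp\mathrm{Ker}\}$ and the matrix semi-measure is $\mu(M)=\lim_{h\to0^+}(|||I_n+hM|||-1)/h$. $\mu_{\mathbf{e},K}$ denotes the semi-measure of $\|\cdot\|_{\mathbf{e},K}$ and $\mu^{\mathrm{d}}_{\mathbf{e}^*,K^*}$ the matrix measure of $\|\cdot\|^{\mathrm{d}}_{\mathbf{e}^*,K^*}$.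 *)

(* Defs.v *)
From HB Require Import structures.
From mathcomp Require Import all_boot all_order all_algebra.
From mathcomp Require Import all_classical all_reals all_analysis.
Set Implicit Arguments. Unset Strict Implicit. Unset Printing Implicit Defensive.
Import Order.TTheory GRing.Theory Num.Theory.
Import numFieldNormedType.Exports.
Local Open Scope classical_set_scope.
Local Open Scope ring_scope.

Section Defs.
Variable R : realType.
Variable n : nat.

Definition dotv (x y : 'cV[R]_n) : R := (x^T *m y) 0 0.

Definition vle k (u v : 'cV[R]_k) : Prop := forall i, u i 0 <= v i 0.

Definition cle (K : set 'cV[R]_n) (x y : 'cV[R]_n) : Prop := K (y - x).

Definition cinterval (K : set 'cV[R]_n) (x y : 'cV[R]_n) : set 'cV[R]_n :=
  [set z | cle K x z /\ cle K z y].

Definition dual_cone (K : set 'cV[R]_n) : set 'cV[R]_n :=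
  [set phi | forall x, K x -> 0 <= dotv phi x].

Definition pointed (K : set 'cV[R]_n) : Prop :=
  forall x, K x -> K (- x) -> x = 0.

Definition metzler (K : set 'cV[R]_n) (A : 'M[R]_n) : Prop :=
  forall phi v, dual_cone K phi -> K v -> dotv phi v = 0 ->
    0 <= dotv phi (A *m v).

Definition gauge (K : set 'cV[R]_n) (e : 'cV[R]_n) (v : 'cV[R]_n) : R :=
  inf [set l : R | 0 <= l /\
        exists2 z, cinterval K (- e) e z & v = l *: z].

Definition dual_gauge (K : set 'cV[R]_n) (es : 'cV[R]_n) (v : 'cV[R]_n) : R :=
  sup [set `|dotv eta v| | eta in cinterval (dual_cone K) (- es) es].

Definition induced (N : 'cV[R]_n -> R) (M : 'M[R]_n) : R :=
  sup [set N (M *m x) | x in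
        [set x | N x = 1 /\ forall y, N y = 0 -> dotv x y = 0]].

(* matrix semi-measure: lim_{h -> 0+} (|||I + hM||| - 1)/h,
   taken in the extended reals (it may be -oo, e.g. for a zero seminorm) *)
Definition semi_measure (N : 'cV[R]_n -> R) (M : 'M[R]_n) : \bar R :=
  lim ((fun h : R => ((induced N (1%:M + h *: M) - 1) / h)%:E) @ (0:R)^'+).

End Defs.

(* Main.v *)
Require Import Defs.
From HB Require Import structures.
From mathcomp Require Import all_boot all_order all_algebra.
From mathcomp Require Import all_classical all_reals all_analysis.
From mathcomp Require Import ring lra.
Import Order.TTheory GRing.Theory Num.Theory.
Import numFieldNormedType.Exports.
Local Open Scope classical_set_scope.
Local Open Scope ring_scope.

Section Gen.
Variable R : realType.
Variable n : nat.

Lemma measure_const (Nm : 'cV[R]_n -> R) (A : 'M[R]_n) (g : R) :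
  (\forall h \near (0:R)^'+, Defs.induced Nm (1%:M + h *: A) = 1 + h * g) ->
  semi_measure Nm A = g%:E.
Proof.
move=> Hn; rewrite /semi_measure; apply: cvg_lim => //.
apply: cvg_near_cst.
near=> h.
have h0 : 0 < h by near: h; exact: nbhs_right_gt.
rewrite (near Hn h) //. congr (_%:E).
by rewrite addrC addKr mulrC mulKf ?gt_eqF.
Unshelve. all: by end_near.
Qed.

Lemma measure_empty (Nm : 'cV[R]_n -> R) (A : 'M[R]_n) :
  (forall x, Nm x <> 1) -> semi_measure Nm A = -oo%E.
Proof.
move=> HN; rewrite /semi_measure; apply: cvg_lim => //.
have I0 : forall M, Defs.induced Nm M = 0.
  move=> M; rewrite /Defs.induced.
  suff -> : [set Nm (M *m x) | x in [set x | Nm x = 1 /\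
             forall y, Nm y = 0 -> dotv x y = 0]] = set0 by rewrite sup0.
  by apply/seteqP; split => // y [x [Hx _] _]; case: (HN x Hx).
apply/cvgeNyPle => B.
have hB : 0 < (`|B| + 1)^-1 by rewrite invr_gt0 ltr_wpDl.
near=> h.
have h0 : 0 < h by near: h; exact: nbhs_right_gt.
have hl : h < (`|B| + 1)^-1 by near: h; exact: nbhs_right_lt.
rewrite I0 lee_fin sub0r mulN1r lerNl.
have : `|B| + 1 < h^-1 by rewrite -(invrK (`|B| + 1)) ltf_pV2 // ?posrE.
have := ler_norm (- B); rewrite normrN; lra.
Unshelve. all: by end_near.
Qed.

Lemma eps_le (x a y : R) : 0 <= y -> (forall eps, 0 < eps -> x <= (a + eps) * y) ->
  x <= a * y.
Proof.
move=> y0 H; apply/ler_addgt0Pr => eps eps0.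
have hy : 0 < y + 1 by lra.
have := H (eps / (y + 1)) (divr_gt0 eps0 hy).
rewrite mulrDl => h1; apply: (le_trans h1); rewrite lerD2l.
rewrite mulrAC ler_pdivrMr // ler_pM2l //; lra.
Qed.

Lemma exists_max (I : finType) (P : pred I) (F : I -> R) :
  (exists i, P i) -> exists i, P i /\ forall j, P j -> F j <= F i.
Proof.
case=> i0 Pi0; case: (arg_maxP F Pi0) => i Pi Hm.
by exists i; split=> // j Pj; exact: Hm.
Qed.

Lemma interior_line (S : set 'cV[R]_n) x v : interior S x ->
  exists2 t : R, 0 < t & forall s : R, `|s| <= t -> S (x + s *: v).
Proof.
move=> /nbhs0P /nbhs_norm0P [eps /= eps0 Heps].
have hv : 0 < `|v| + 1 by rewrite ltr_wpDl.
exists (eps / (2 * (`|v| + 1))).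
  by rewrite divr_gt0 // mulr_gt0.
move=> s hs; apply: Heps => /=. rewrite normrZ.
apply: (le_lt_trans (y := eps / (2 * (`|v| + 1)) * (`|v| + 1))).
  apply: ler_pM => //.
  by rewrite lerDl.
rewrite invfM mulrA -mulrA mulVf ?gt_eqF // mulr1.
rewrite ltr_pdivrMr //; lra.
Qed.

Lemma dotvE (x y : 'cV[R]_n) : dotv x y = \sum_i x i 0 * y i 0.
Proof. by rewrite /dotv !mxE; apply: eq_bigr => i _; rewrite !mxE. Qed.

Lemma addE k l (X Y : 'M[R]_(k,l)) i j : (X + Y) i j = X i j + Y i j.
Proof. by rewrite mxE. Qed.
Lemma oppE k l (X : 'M[R]_(k,l)) i j : (- X) i j = - X i j.
Proof. by rewrite mxE. Qed.
Lemma sclE k l (a : R) (X : 'M[R]_(k,l)) i j : (a *: X) i j = a * X i j.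
Proof. by rewrite mxE. Qed.
Lemma zeroE k l i j : (0 : 'M[R]_(k,l)) i j = 0.
Proof. by rewrite mxE. Qed.

Lemma Gint_zero k (G : 'M[R]_(k,n)) (S : set 'cV[R]_n)
  (hS : forall x, S x <-> forall i, 0 <= (G *m x) i 0) (z : 'cV[R]_n) :
  interior S z -> forall i, (G *m z) i 0 = 0 -> forall x : 'cV[R]_n, (G *m x) i 0 = 0.
Proof.
move=> /(interior_line ^~ _) hz i hi x.
have [t t0 ht] := hz x.
have /hS/(_ i) : S (z + t *: x) by apply: ht; rewrite ger0_norm // ltW.
have /hS/(_ i) : S (z + (- t) *: x) by apply: ht; rewrite normrN ger0_norm // ltW.
rewrite !mulmxDr -!scalemxAr !addE !sclE hi !add0r => h1 h2.
apply/le_anti/andP; split; nra.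
Qed.

End Gen.
Arguments interior_line {R n S x} v.
Arguments Gint_zero {R n k G S} hS {z}.
Arguments measure_const {R n Nm A g}.
Arguments measure_empty {R n Nm A}.
Arguments eps_le {R x a y}.
Arguments exists_max {R I P F}.

Section Alg.
Variable R : realType.

Lemma rowv_self0 k (u : 'rV[R]_k) : u *m u^T = 0 -> u = 0.
Proof.
move=> h; have := congr1 (fun M : 'M[R]_1 => M 0 0) h; rewrite mxE zeroE => hs.
have hz : forall j, true -> u 0 j * u^T j 0 = 0.
  apply: psumr_eq0P => // j _; rewrite mxE; exact: sqr_ge0.
apply/rowP => j; have := hz j isT; rewrite mxE zeroE.
by move/eqP; rewrite mulf_eq0 orbb => /eqP.
Qed.

Lemma proj_exists k n (H : 'M[R]_(k,n)) (e : 'cV[R]_n) : exists e' : 'cV[R]_n,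
  H *m e' = H *m e /\ forall y : 'cV[R]_n, H *m y = 0 -> dotv e' y = 0.
Proof.
set P := H *m H^T.
have ker0 : (H :&: kermx H^T)%MS = 0.
  apply/row_matrixP => i; rewrite row0; set u := row i _.
  have uH : (u <= H)%MS := submx_trans (row_sub i _) (capmxSl _ _).
  have : (u <= kermx H^T)%MS := submx_trans (row_sub i _) (capmxSr _ _).
  rewrite sub_kermx => /eqP uK.
  have [w uw] := submxP uH.
  apply: rowv_self0.
  rewrite {1}uw -mulmxA.
  have -> : H *m u^T = (u *m H^T)^T by rewrite trmx_mul trmxK.
  by rewrite uK trmx0 mulmx0.
have rk : \rank P = \rank H.
  by have := mxrank_mul_ker H H^T; rewrite ker0 mxrank0 addn0.
have sub : (H^T <= P)%MS.
  case: (mxrank_leqif_sup (submxMl H H^T)) => _ <-.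
  by rewrite -/P rk mxrank_tr.
have : (e^T *m H^T <= P)%MS := submx_trans (submxMl _ _) sub.
case/submxP => w hw.
exists (w *m H)^T; split.
  apply: (can_inj (@trmxK _ _ _)).
  by rewrite !trmx_mul !trmxK hw mulmxA.
by move=> y hy; rewrite /dotv trmxK -mulmxA hy mulmx0 zeroE.
Qed.
End Alg.

Section Part1.
Variables (R : realType) (n m p : nat) (K : set 'cV[R]_n) (H : 'M[R]_(m,n)) (V : 'M[R]_(n,p)).
Hypothesis hK : forall x, K x <-> forall i, 0 <= (H *m x) i 0.
Hypothesis hV : K = [set V *m y | y in [set y | vle 0 y]].
Variables (A : 'M[R]_n).
Hypothesis hA : metzler K A.

Lemma Hrow_dot i (x : 'cV[R]_n) : dotv (row i H)^T x = (H *m x) i 0.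
Proof. by rewrite /dotv trmxK -row_mul mxE. Qed.

Lemma Hrow_dual i : dual_cone K (row i H)^T.
Proof. by move=> x /hK Kx; rewrite Hrow_dot. Qed.

Lemma metz_ker (l : 'cV[R]_n) : (forall i, (H *m l) i 0 = 0) ->
  forall i, (H *m (A *m l)) i 0 = 0.
Proof.
move=> hl i.
have Kl : K l by apply/hK => j; rewrite hl.
have Knl : K (- l) by apply/hK => j; rewrite mulmxN oppE hl oppr0.
have := hA _ _ (Hrow_dual i) Kl; rewrite !Hrow_dot hl => /(_ erefl) h1.
have := hA _ _ (Hrow_dual i) Knl; rewrite !Hrow_dot mulmxN oppE hl oppr0.
move=> /(_ erefl); rewrite mulmxN mulmxN oppE oppr_ge0 => h2.
by apply/le_anti; rewrite h1 h2.
Qed.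

Lemma col_mulmx k l q (X : 'M[R]_(k,l)) (Y : 'M[R]_(l,q)) j :
  col j (X *m Y) = X *m col j Y.
Proof. by rewrite !colE mulmxA. Qed.

Lemma colij k l (X : 'M[R]_(k,l)) i j : col j X i 0 = X i j.
Proof. by rewrite mxE. Qed.

Lemma mulE k l q (X : 'M[R]_(k,l)) (Y : 'M[R]_(l,q)) i r :
  (X *m Y) i r = \sum_j X i j * Y j r.
Proof. by rewrite mxE. Qed.

Lemma colK j : K (col j V).
Proof.
rewrite hV colE; exists (delta_mx j 0) => //= i.
by rewrite !mxE ler0n.
Qed.

Lemma Kpos : \forall h \near (0:R)^'+, forall x, K x -> K ((1%:M + h *: A) *m x).
Proof.
have Hij : forall ij : 'I_m * 'I_p, \forall h \near (0:R)^'+,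
    0 <= (H *m V) ij.1 ij.2 + h * (H *m A *m V) ij.1 ij.2.
  move=> [i j] /=.
  have ea : (H *m V) i j = dotv (row i H)^T (col j V).
    by rewrite Hrow_dot -col_mulmx colij.
  have eb : (H *m A *m V) i j = dotv (row i H)^T (A *m col j V).
    by rewrite Hrow_dot -!col_mulmx colij mulmxA.
  have a0 : 0 <= (H *m V) i j by rewrite ea; exact: Hrow_dual (colK j).
  case: (ltrgt0P ((H *m V) i j)) a0 => // [apos|az] _.
    set a := (H *m V) i j; set b := (H *m A *m V) i j.
    have hb : 0 < a / (`|b| + 1) by rewrite divr_gt0 // ltr_wpDl.
    near=> h.
    have h0 : 0 < h by near: h; exact: nbhs_right_gt.
    have hl : h < a / (`|b| + 1) by near: h; exact: nbhs_right_lt.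
    have : h * (`|b| + 1) < a by rewrite -ltr_pdivlMr // ltr_wpDl.
    have := ler_norm (- b); rewrite normrN => nb.
    nra.
  have b0 : 0 <= (H *m A *m V) i j.
    by rewrite eb; apply: hA _ _ (Hrow_dual i) (colK j) _; rewrite -ea.
  near=> h.
  have h0 : 0 < h by near: h; exact: nbhs_right_gt.
  by rewrite az add0r mulr_ge0 // ltW.
have : \forall h \near (0:R)^'+, forall ij : 'I_m * 'I_p,
    0 <= (H *m V) ij.1 ij.2 + h * (H *m A *m V) ij.1 ij.2.
  by apply: filter_forall.
apply: filterS => h hh x Kx.
have : [set V *m y | y in [set y | vle 0 y]] x by rewrite -hV.
case=> y y0 ey.
apply/hK => i.
rewrite -ey mulmxDl mul1mx -scalemxAl mulmxDr -scalemxAr !mulmxA.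
rewrite addE sclE (mulE _ _ _ (H *m V)) (mulE _ _ _ (H *m A *m V)) big_distrr /= -big_split /=.
apply: sumr_ge0 => j _.
rewrite mulrA -mulrDl mulr_ge0 //; first exact: (hh (i, j)).
by have := y0 j; rewrite zeroE.
Unshelve. all: by end_near.
Qed.

Variable e : 'cV[R]_n.
Hypothesis he : interior K e.

Definition bnd (v : 'cV[R]_n) (l : R) := forall i, `|(H *m v) i 0| <= l * (H *m e) i 0.
Definition Sg (v : 'cV[R]_n) := [set l : R | 0 <= l /\ (exists2 z, cinterval K (- e) e z & v = l *: z)].

Lemma Ke : K e.
Proof. exact: interior_subset he. Qed.

Lemma He0 i : 0 <= (H *m e) i 0.
Proof. by have /hK := Ke; apply. Qed.

Lemma Hzero i : (H *m e) i 0 = 0 -> forall x : 'cV[R]_n, (H *m x) i 0 = 0.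
Proof. exact: (Gint_zero hK he). Qed.

Lemma cint_iff (z : 'cV[R]_n) : cinterval K (-e) e z <-> forall i, `|(H *m z) i 0| <= (H *m e) i 0.
Proof.
rewrite /cinterval /cle /=; split.
  move=> [/hK h1 /hK h2] i; move: (h1 i) (h2 i).
  rewrite !mulmxDr !mulmxN !addE !oppE opprK ler_norml => a b.
  apply/andP; split; lra.
move=> h; split; apply/hK => i; move: (h i);
  rewrite !mulmxDr !mulmxN !addE !oppE ?opprK ler_norml => /andP[a b]; lra.
Qed.

Lemma mem_pos v l : 0 < l -> bnd v l -> Sg v l.
Proof.
move=> l0 hb; split; first exact: ltW.
exists (l^-1 *: v); last by rewrite scalerA mulfV ?gt_eqF // scale1r.
apply/cint_iff => i; rewrite -scalemxAr sclE normrM gtr0_norm ?invr_gt0 //.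
by rewrite ler_pdivrMl // hb.
Qed.

Lemma mem_bnd v l : Sg v l -> bnd v l.
Proof.
move=> [l0 [z /cint_iff hz ->]] i.
by rewrite -scalemxAr sclE normrM ger0_norm // ler_wpM2l.
Qed.

Lemma Sg_ne v : exists l, Sg v l.
Proof.
have [t t0 ht] := interior_line v he.
have /hK h1 : K (e + t *: v) by apply: ht; rewrite ger0_norm // ltW.
have /hK h2 : K (e + (- t) *: v) by apply: ht; rewrite normrN ger0_norm // ltW.
exists t^-1; apply: mem_pos; first by rewrite invr_gt0.
move=> i; move: (h1 i) (h2 i); rewrite !mulmxDr -!scalemxAr !addE !sclE.
move=> a b; rewrite mulrC ler_pdivlMr // -[t in _ * t]gtr0_norm // -normrM ler_norml.
apply/andP; split; nra.
Qed.

Lemma gauge_le v l : 0 < l -> bnd v l -> gauge K e v <= l.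
Proof.
move=> l0 hb; apply: (ge_inf (E := Sg v)); last exact: mem_pos.
by exists 0 => x [].
Qed.

Lemma gauge_ge v l : (forall l', 0 <= l' -> bnd v l' -> l <= l') -> l <= gauge K e v.
Proof.
move=> hl; apply: lb_le_inf; first exact: Sg_ne.
by move=> l' hl'; apply: hl; [case: hl' | exact: mem_bnd].
Qed.

Lemma gauge_eps v a : gauge K e v = a -> forall eps, 0 < eps ->
  exists l, [/\ 0 <= l, l < a + eps & bnd v l].
Proof.
move=> ha eps eps0.
have [l hl lt] : exists2 l, Sg v l & l < a + eps.
  apply: inf_lt; first exact: Sg_ne.
  by rewrite -/(gauge K e v) ha ltrDl.
by exists l; split => //; [case: hl | exact: mem_bnd].
Qed.

Lemma gauge_bnd v a : gauge K e v = a -> bnd v a.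
Proof.
move=> ha i; apply: eps_le; first exact: He0.
move=> eps eps0; have [l [l0 la hb]] := @gauge_eps v a ha eps eps0.
apply: (le_trans (hb i)); apply: ler_wpM2r; [exact: He0 | exact: ltW].
Qed.

Lemma gauge0 v : gauge K e v = 0 -> forall i, (H *m v) i 0 = 0.
Proof.
by move=> /gauge_bnd hb i; have := hb i; rewrite mul0r normr_le0 => /eqP.
Qed.


Lemma HME h (x : 'cV[R]_n) i : (H *m ((1%:M + h *: A) *m x)) i 0 =
  (H *m x) i 0 + h * (H *m (A *m x)) i 0.
Proof. by rewrite mulmxDl mul1mx -scalemxAl mulmxDr -scalemxAr addE sclE. Qed.

Lemma part1_nd (i1 : 'I_m) (hi1 : 0 < (H *m e) i1 0) : exists g : R,
  (forall c, g <= c <-> cle K (A *m e) (c *: e)) /\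
  \forall h \near (0:R)^'+, Defs.induced (gauge K e) (1%:M + h *: A) = 1 + h * g.
Proof.
have [i0 [Pi0 Hi0]] := @exists_max _ _ (fun i => 0 < (H *m e) i 0)
   (fun i => (H *m (A *m e)) i 0 / (H *m e) i 0) (ex_intro _ i1 hi1).
set g := (H *m (A *m e)) i0 0 / (H *m e) i0 0.
have gprop : forall i, (H *m (A *m e)) i 0 <= g * (H *m e) i 0.
  move=> i; case: (ltrgt0P ((H *m e) i 0)) (He0 i) => // [hp|hz] _.
    by rewrite -ler_pdivrMr //; exact: Hi0.
  by rewrite hz mulr0 (@Hzero i hz).
have geq : (H *m (A *m e)) i0 0 = g * (H *m e) i0 0.
  by rewrite /g divfK // gt_eqF.
exists g; split.
  move=> c; rewrite /cle; split.
    move=> gc; apply/hK => i; rewrite mulmxBr addE oppE -scalemxAr sclE subr_ge0.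
    apply: (le_trans (gprop i)); apply: ler_wpM2r => //; exact: He0.
  move=> /hK /(_ i0); rewrite mulmxBr addE oppE -scalemxAr sclE subr_ge0 geq.
  by rewrite ler_pM2r.
have [e' [He' ke']] := @proj_exists _ _ _ H e.
have He'i : forall i, (H *m e') i 0 = (H *m e) i 0 by move=> i; rewrite He'.
have HAe' : forall i, (H *m (A *m e')) i 0 = (H *m (A *m e)) i 0.
  move=> i; apply/eqP; rewrite -subr_eq0; apply/eqP.
  have hk : forall j, (H *m (e' - e)) j 0 = 0.
    by move=> j; rewrite mulmxDr mulmxN addE oppE He'i subrr.
  by have := @metz_ker _ hk i; rewrite mulmxDr mulmxN mulmxDr mulmxN addE oppE.
have hg : 0 < (`|g| + 1)^-1 by rewrite invr_gt0 ltr_wpDl.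
have hpos := Kpos.
near=> h.
have h0 : 0 < h by near: h; exact: nbhs_right_gt.
have hl : h < (`|g| + 1)^-1 by near: h; exact: nbhs_right_lt.
have Kp : forall x, K x -> K ((1%:M + h *: A) *m x) by near: h.
have g1 : 0 < 1 + h * g.
  have : h * (`|g| + 1) < 1 by rewrite -ltr_pdivlMr // ltr_wpDl.
  have := ler_norm (- g); rewrite normrN => ng; nra.
set M := 1%:M + h *: A.
set Dom := [set x | gauge K e x = 1 /\ forall y, gauge K e y = 0 -> dotv x y = 0].
have ub : forall x, Dom x -> gauge K e (M *m x) <= 1 + h * g.
  move=> x [/gauge_bnd bx _]; apply: gauge_le => // i.
  have /Kp /hK /(_ i) : K (e + x).
    apply/hK => j; rewrite mulmxDr addE; have := bx j.
    rewrite mul1r ler_norml => /andP[a b]; lra.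
  have /Kp /hK /(_ i) : K (e - x).
    apply/hK => j; rewrite mulmxDr mulmxN addE oppE; have := bx j.
    rewrite mul1r ler_norml => /andP[a b]; lra.
  rewrite !HME !mulmxDr !mulmxN !addE !oppE ler_norml.
  have := gprop i; rewrite -/M => a b c; apply/andP; split; nra.
have De' : Dom e'.
  split; last by move=> y /gauge0 hy; apply: ke'; apply/matrixP => i j;
    rewrite ord1 zeroE hy.
  apply/le_anti/andP; split.
    apply: gauge_le => // i; rewrite He'i mul1r ger0_norm //; exact: He0.
  apply: gauge_ge => l l0 /(_ i1); rewrite He'i ger0_norm ?He0 // => hb.
  by rewrite -(ler_pM2r hi1) mul1r.
have lb : 1 + h * g <= gauge K e (M *m e').
  apply: gauge_ge => l l0 /(_ i0); rewrite HME He'i HAe' geq.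
  rewrite -[X in X + _]mul1r mulrA -mulrDl ger0_norm; last first.
    by rewrite mulr_ge0 // ltW.
  by rewrite ler_pM2r.
rewrite /Defs.induced -/M -/Dom.
apply/le_anti/andP; split.
  apply: ge_sup; first by exists (gauge K e (M *m e')); exists e'.
  by move=> _ [x Dx <-]; exact: ub.
apply: (le_trans lb); apply: sup_upper_bound; last by exists e'.
split; first by exists (gauge K e (M *m e')); exists e'.
by exists (1 + h * g) => _ [x Dx <-]; exact: ub.
Unshelve. all: by end_near.
Qed.


Lemma part1_deg (h0 : forall i, (H *m e) i 0 = 0) :
  (forall x, gauge K e x <> 1) /\ forall c, cle K (A *m e) (c *: e).
Proof.
have Hx : forall (x : 'cV[R]_n) i, (H *m x) i 0 = 0 by move=> x i; exact: Hzero.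
split.
  move=> x hx; have : gauge K e x <= 2^-1.
    by apply: gauge_le => // i; rewrite !Hx normr0 mulr0.
  by rewrite hx; lra.
by move=> c; apply/hK => i; rewrite Hx.
Qed.

Lemma dotvC (x y : 'cV[R]_n) : dotv x y = dotv y x.
Proof. by rewrite !dotvE; apply: eq_bigr => i _; rewrite mulrC. Qed.

Lemma dotvDl (x y z : 'cV[R]_n) : dotv (x + y) z = dotv x z + dotv y z.
Proof. by rewrite !dotvE -big_split; apply: eq_bigr => i _; rewrite addE mulrDl. Qed.

Lemma dotvNl (x z : 'cV[R]_n) : dotv (- x) z = - dotv x z.
Proof. by rewrite !dotvE -sumrN; apply: eq_bigr => i _; rewrite oppE mulNr. Qed.

Lemma dotvZl a (x z : 'cV[R]_n) : dotv (a *: x) z = a * dotv x z.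
Proof. by rewrite !dotvE big_distrr; apply: eq_bigr => i _; rewrite sclE /= mulrA. Qed.

Lemma dotvDr (x y z : 'cV[R]_n) : dotv z (x + y) = dotv z x + dotv z y.
Proof. by rewrite !(dotvC z) dotvDl. Qed.

Lemma dotvNr (x z : 'cV[R]_n) : dotv z (- x) = - dotv z x.
Proof. by rewrite !(dotvC z) dotvNl. Qed.

Lemma dotvZr a (x z : 'cV[R]_n) : dotv z (a *: x) = a * dotv z x.
Proof. by rewrite !(dotvC z) dotvZl. Qed.

Lemma dotvMl (M : 'M[R]_n) (x z : 'cV[R]_n) : dotv (M^T *m x) z = dotv x (M *m z).
Proof. by rewrite /dotv trmx_mul trmxK mulmxA. Qed.

Lemma dotV (phi : 'cV[R]_n) (y : 'cV[R]_p) :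
  dotv phi (V *m y) = \sum_j (V^T *m phi) j 0 * y j 0.
Proof.
rewrite /dotv mulmxA -[phi^T *m V]trmxK trmx_mul trmxK.
by rewrite mulE; apply: eq_bigr => j _; rewrite mxE.
Qed.

Lemma dot_col (phi : 'cV[R]_n) j : dotv phi (col j V) = (V^T *m phi) j 0.
Proof.
rewrite /dotv -col_mulmx colij -[phi^T *m V]trmxK trmx_mul trmxK mxE.
by [].
Qed.

Lemma hKd (phi : 'cV[R]_n) : dual_cone K phi <-> forall j, 0 <= (V^T *m phi) j 0.
Proof.
split.
  by move=> hphi j; rewrite -dot_col; apply: hphi; exact: colK.
move=> hj x; rewrite hV => -[y y0 <-]; rewrite dotV.
apply: sumr_ge0 => j _; apply: mulr_ge0 => //.
by have := y0 j; rewrite zeroE.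
Qed.

Lemma MtE h : (1%:M + h *: A)^T = 1%:M + h *: A^T.
Proof. by apply/matrixP => i j; rewrite !mxE eq_sym. Qed.

Lemma VME h (x : 'cV[R]_n) j : (V^T *m ((1%:M + h *: A)^T *m x)) j 0 =
  (V^T *m x) j 0 + h * (V^T *m (A^T *m x)) j 0.
Proof. by rewrite MtE mulmxDl mul1mx -scalemxAl mulmxDr -scalemxAr addE sclE. Qed.

Variable es : 'cV[R]_n.
Hypothesis hes : interior (dual_cone K) es.

Definition J := cinterval (dual_cone K) (- es) es.

Lemma Kes : dual_cone K es.
Proof. exact: interior_subset hes. Qed.

Lemma Ves0 j : 0 <= (V^T *m es) j 0.
Proof. by have /hKd := Kes; apply. Qed.

Lemma Vzero j : (V^T *m es) j 0 = 0 -> forall x : 'cV[R]_n, (V^T *m x) j 0 = 0.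
Proof. exact: (Gint_zero hKd hes). Qed.

Lemma J_iff (z : 'cV[R]_n) : J z <-> forall j, `|(V^T *m z) j 0| <= (V^T *m es) j 0.
Proof.
rewrite /J /cinterval /cle /=; split.
  move=> [/hKd h1 /hKd h2] i; move: (h1 i) (h2 i).
  rewrite !mulmxDr !mulmxN !addE !oppE opprK ler_norml => a b.
  apply/andP; split; lra.
move=> h; split; apply/hKd => i; move: (h i);
  rewrite !mulmxDr !mulmxN !addE !oppE ?opprK ler_norml => /andP[a b]; lra.
Qed.

Lemma J_dotK eta k : J eta -> K k -> `|dotv eta k| <= dotv es k.
Proof.
move=> [h1 h2] Kk; have := h1 k Kk; have := h2 k Kk.
rewrite !dotvDl !dotvNl opprK ler_norml => a b; apply/andP; split; lra.
Qed.

Definition Dset (v : 'cV[R]_n) := [set `|dotv eta v| | eta in J].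

Lemma J0 : J 0.
Proof. by apply/J_iff => j; rewrite mulmx0 zeroE normr0 Ves0. Qed.

Lemma Dset_ne v : Dset v !=set0.
Proof. by exists (`|dotv 0 v|); exists 0 => //; exact: J0. Qed.

Lemma Dset_ub v : has_ubound (Dset v).
Proof.
have [t t0 ht] := interior_line v he.
have K1 : K (e + t *: v) by apply: ht; rewrite ger0_norm // ltW.
have K2 : K (e + (- t) *: v) by apply: ht; rewrite normrN ger0_norm // ltW.
exists ((dotv es (e + t *: v) + dotv es (e + (- t) *: v)) / (2 * t)).
move=> _ [eta Jeta <-].
have := @J_dotK _ _ Jeta K1; have := @J_dotK _ _ Jeta K2.
rewrite !dotvDr !dotvZr ler_pdivlMr ?mulr_gt0 // !ler_norml.
move=> /andP[a b] /andP[c d].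
rewrite -[t in _ * (2 * t)]gtr0_norm // -[2]gtr0_norm // -!normrM ler_norml.
apply/andP; split; nra.
Qed.

Lemma D_ge v eta : J eta -> `|dotv eta v| <= dual_gauge K es v.
Proof.
move=> Jeta; apply: (sup_upper_bound (E := Dset v)); last by exists eta.
by split; [exact: Dset_ne | exact: Dset_ub].
Qed.

Lemma D_le v b : (forall eta, J eta -> `|dotv eta v| <= b) -> dual_gauge K es v <= b.
Proof.
move=> hb; apply: (ge_sup (E := Dset v)); first exact: Dset_ne.
by move=> _ [eta Jeta <-]; exact: hb.
Qed.

Lemma D0_ker x y : dual_gauge K es y = 0 -> dotv x y = 0.
Proof.
move=> hy.
have [t t0 ht] := interior_line x hes.
have Jt : J (t *: x).
  split; rewrite /cle.
    by rewrite opprK addrC; apply: ht; rewrite ger0_norm // ltW.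
  by rewrite -scaleNr; apply: ht; rewrite normrN ger0_norm // ltW.
have := @D_ge y _ Jt; rewrite hy normr_le0 dotvZl mulf_eq0 gt_eqF //=.
by move/eqP.
Qed.


Lemma part2_nd (j1 : 'I_p) (hj1 : 0 < (V^T *m es) j1 0) : exists g : R,
  (forall c, g <= c <-> cle (dual_cone K) (A^T *m es) (c *: es)) /\
  \forall h \near (0:R)^'+, Defs.induced (dual_gauge K es) (1%:M + h *: A) = 1 + h * g.
Proof.
have [j0 [Pj0 Hj0]] := @exists_max _ _ (fun j => 0 < (V^T *m es) j 0)
   (fun j => (V^T *m (A^T *m es)) j 0 / (V^T *m es) j 0) (ex_intro _ j1 hj1).
set g := (V^T *m (A^T *m es)) j0 0 / (V^T *m es) j0 0.
have gprop : forall j, (V^T *m (A^T *m es)) j 0 <= g * (V^T *m es) j 0.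
  move=> j; case: (ltrgt0P ((V^T *m es) j 0)) (Ves0 j) => // [hp|hz] _.
    by rewrite -ler_pdivrMr //; exact: Hj0.
  by rewrite hz mulr0 (@Vzero j hz).
have geq : (V^T *m (A^T *m es)) j0 0 = g * (V^T *m es) j0 0.
  by rewrite /g divfK // gt_eqF.
exists g; split.
  move=> c; rewrite /cle; split.
    move=> gc; apply/hKd => j; rewrite mulmxBr addE oppE -scalemxAr sclE subr_ge0.
    apply: (le_trans (gprop j)); apply: ler_wpM2r => //; exact: Ves0.
  move=> /hKd /(_ j0); rewrite mulmxBr addE oppE -scalemxAr sclE subr_ge0 geq.
  by rewrite ler_pM2r.
have hg : 0 < (`|g| + 1)^-1 by rewrite invr_gt0 ltr_wpDl.
have hpos := Kpos.
near=> h.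
have h0 : 0 < h by near: h; exact: nbhs_right_gt.
have hl : h < (`|g| + 1)^-1 by near: h; exact: nbhs_right_lt.
have Kp : forall x, K x -> K ((1%:M + h *: A) *m x) by near: h.
have g1 : 0 < 1 + h * g.
  have : h * (`|g| + 1) < 1 by rewrite -ltr_pdivlMr // ltr_wpDl.
  have := ler_norm (- g); rewrite normrN => ng; nra.
set M := 1%:M + h *: A.
have Kdp : forall phi, dual_cone K phi -> dual_cone K (M^T *m phi).
  by move=> phi hphi x Kx; rewrite dotvMl; apply: hphi; exact: Kp.
set Dom := [set x | dual_gauge K es x = 1 /\
                    forall y, dual_gauge K es y = 0 -> dotv x y = 0].
have ub : forall x, Dom x -> dual_gauge K es (M *m x) <= 1 + h * g.
  move=> x [Dx _]; apply: D_le => eta Jeta.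
  rewrite -dotvMl.
  have Jz : J ((1 + h * g)^-1 *: (M^T *m eta)).
    apply/J_iff => j; rewrite -scalemxAr sclE normrM gtr0_norm ?invr_gt0 //.
    rewrite ler_pdivrMl //.
    move: Jeta => [h1 h2]; rewrite /cle in h1 h2.
    have /hKd /(_ j) := Kdp _ h1; have /hKd /(_ j) := Kdp _ h2.
    rewrite !mulmxDr !mulmxN !addE !oppE opprK -/M !VME ler_norml.
    have := gprop j => a b c; apply/andP; split; nra.
  have := @D_ge x _ Jz; rewrite Dx dotvZl normrM gtr0_norm ?invr_gt0 //.
  by rewrite ler_pdivrMl // mulr1.
set x0 := ((V^T *m es) j0 0)^-1 *: col j0 V.
have hVj0 : (V^T *m es) j0 0 != 0 by rewrite gt_eqF.
have Jes : J es.
  apply/J_iff => j; rewrite ger0_norm //; exact: Ves0.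
have Dx0 : Dom x0.
  split; last by move=> y /D0_ker.
  apply/le_anti/andP; split.
    apply: D_le => eta /J_iff Jeta; rewrite dotvZr dot_col normrM.
    rewrite ger0_norm ?invr_ge0 ?Ves0 // ler_pdivrMl // mulr1; exact: Jeta.
  have := @D_ge x0 _ Jes; rewrite dotvZr dot_col mulVf // normr1; exact.
have lb : 1 + h * g <= dual_gauge K es (M *m x0).
  have := @D_ge (M *m x0) _ Jes; rewrite -dotvMl dotvZr dot_col -/M VME geq.
  have -> : ((V^T *m es) j0 0)^-1 * ((V^T *m es) j0 0 + h * (g * (V^T *m es) j0 0))
     = 1 + h * g by field.
  by rewrite ger0_norm // ltW.
rewrite /Defs.induced -/M -/Dom.
apply/le_anti/andP; split.
  apply: ge_sup; first by exists (dual_gauge K es (M *m x0)); exists x0.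
  by move=> _ [x Dx <-]; exact: ub.
apply: (le_trans lb); apply: sup_upper_bound; last by exists x0.
split; first by exists (dual_gauge K es (M *m x0)); exists x0.
by exists (1 + h * g) => _ [x Dx <-]; exact: ub.
Unshelve. all: by end_near.
Qed.


Lemma part2_deg (h0 : forall j, (V^T *m es) j 0 = 0) :
  (forall x, dual_gauge K es x <> 1) /\
  forall c, cle (dual_cone K) (A^T *m es) (c *: es).
Proof.
have Vx : forall (x : 'cV[R]_n) j, (V^T *m x) j 0 = 0 by move=> x j; exact: Vzero.
split; last by move=> c; apply/hKd => j; rewrite Vx.
have K0 : forall k, K k -> k = 0.
  move=> k Kk.
  have : [set V *m y | y in [set y | vle 0 y]] k by rewrite -hV.
  case=> y _ <-.
  have h1 : dotv (V *m y) (V *m y) = 0.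
    by rewrite dotV; apply: big1 => j _; rewrite Vx mul0r.
  have h2 : (V *m y)^T *m (V *m y)^T^T = 0.
    by apply/matrixP => i j; rewrite !ord1 zeroE trmxK.
  have := @rowv_self0 _ _ _ h2 => h3.
  by apply: (can_inj (@trmxK _ _ _)); rewrite h3 trmx0.
have e0 : e = 0 := K0 _ Ke.
have all0 : forall v : 'cV[R]_n, v = 0.
  move=> v; have [t t0 ht] := interior_line v he.
  have Kt : K (e + t *: v) by apply: ht; rewrite ger0_norm // ltW.
  have := K0 _ Kt.
  by rewrite e0 add0r => /eqP; rewrite scaler_eq0 gt_eqF //= => /eqP.
move=> x; rewrite (all0 x) => hx.
have : dual_gauge K es 0 <= 0.
  by apply: D_le => eta _; rewrite /dotv mulmx0 zeroE normr0.
by rewrite hx; lra.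
Qed.

End Part1.

Theorem theorem1 (R : realType) (n m p : nat)
    (K : set 'cV[R]_n) (H : 'M[R]_(m, n)) (V : 'M[R]_(n, p))
    (hH : K = [set x | vle 0 (H *m x)])
    (hV : K = [set V *m y | y in [set y | vle 0 y]])
    (hproper : exists x, (interior K) x)
    (e : 'cV[R]_n) (he : (interior K) e)
    (A : 'M[R]_n) (hA : metzler K A) (c : R) :
  ((semi_measure (gauge K e) A <= c%:E)%E <-> cle K (A *m e) (c *: e)) /\
  (cle K (A *m e) (c *: e) <-> vle (H *m A *m e) (c *: (H *m e))) /\
  (pointed K -> forall es : 'cV[R]_n, (interior (dual_cone K)) es ->
     ((semi_measure (dual_gauge K es) A <= c%:E)%E <->
        cle (dual_cone K) (A^T *m es) (c *: es)) /\
     (cle (dual_cone K) (A^T *m es) (c *: es) <->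
        vle (V^T *m A^T *m es) (c *: (V^T *m es)))).
Proof.
have hK : forall x, K x <-> forall i, 0 <= (H *m x) i 0.
  by move=> x; rewrite hH /vle /=; split => h i; move: (h i); rewrite zeroE.
split.
  case: (pselect (exists i, 0 < (H *m e) i 0)) => [[i1 hi1]|hn].
    have [g [hg hnear]] := @part1_nd _ _ _ _ _ _ _ hK hV _ hA _ he _ hi1.
    by rewrite (measure_const hnear) lee_fin; exact: hg.
  have h0 : forall i, (H *m e) i 0 = 0.
    move=> i; have := @He0 _ _ _ _ _ hK _ he i.
    rewrite le_eqVlt => /orP[/eqP <- //|hlt]; case: hn; by exists i.
  have [hne hc] := @part1_deg _ _ _ _ _ hK A _ he h0.
  by rewrite (measure_empty hne); split => _; [exact: hc | exact: leNye].
split.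
  rewrite /cle hK /vle; split => h i; move: (h i);
    rewrite mulmxBr addE oppE -scalemxAr !sclE mulmxA subr_ge0; apply.
move=> _ es hes.
have hKd' := @hKd _ _ _ _ _ hV.
split.
  case: (pselect (exists j, 0 < (V^T *m es) j 0)) => [[j1 hj1]|hn].
    have [g [hg hnear]] := @part2_nd _ _ _ _ _ _ _ hK hV _ hA _ he _ hes _ hj1.
    by rewrite (measure_const hnear) lee_fin; exact: hg.
  have h0 : forall j, (V^T *m es) j 0 = 0.
    move=> j; have := @Ves0 _ _ _ _ _ hV _ hes j.
    rewrite le_eqVlt => /orP[/eqP <- //|hlt]; case: hn; by exists j.
  have [hne hc] := @part2_deg _ _ _ _ _ hV A _ he _ hes h0.
  by rewrite (measure_empty hne); split => _; [exact: hc | exact: leNye].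
rewrite /cle hKd' /vle; split => h j; move: (h j);
  rewrite mulmxBr addE oppE -scalemxAr !sclE mulmxA subr_ge0; apply.
Qed.
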